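(* The output of MPS is not always decomposable, even under lexicographic preferences. Concretely, for $n=3$, $p=2$, $D_F=\{1_F,2_F,3_F\}$, $D_B=\{1_B,2_B,3_B\}$ and the lexicographic preferences: agent 1: $F\rhd_1 B$, $1_F\rhd 2_F\rhd 3_F$, $1_B\rhd 2_B\rhd 3_B$; agent 2: $F\rhd_2 B$, $1_F\rhd 2_F\rhd 3_F$, $1_B\rhd 3_B\rhd 2_B$; agent 3: $B\rhd_3 F$, $1_F\rhd 2_F\rhd 3_F$, $2_B\rhd 3_B\rhd 1_B$, the assignment $\mathrm{MPS}(R)$ is not decomposable.
   Context: Setting: agents $N=\{1,\dots,n\}$; types $D_i$ pairwise disjoint, $|D_i|=n$, unit supply; bundles $\mathcal D=\prod_i D_i$, $x_i$ the type-$i$ component. An assignment is an $n\times|\mathcal D|$ matrix $(p_{j,x})$ with entries in $[0,1]$, rows summing to $1$, and $\sum_j\sum_{x\ni o}p_{j,x}=1$ for each item $o$; it is discrete if all entries are in $\{0,1\}$ and decomposable if it is a convex combination of discrete assignments. Lexicographic preference: importance order $\rhd_j$ on types and orders $\rhd^i_j$ on each $D_i$; $x\succ_j y$ iff some type $i$ has $x_i\rhd^i_j y_i$ and $x_{i'}=y_{i'}$ for all $i'\rhd_j i$. MPS: items start with supply $1$; a bundle is available if all its items have positive remaining supply. Continuously in time each agent eats her most preferred available bundle at rate $1$ (each item of it consumed at rate $1$, $p_{j,x}$ growing at rate $1$); exhausted items make all bundles containing them unavailable; run until all items are exhausted. *)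

(* Defs.v *)
From mathcomp Require Import all_boot all_order all_algebra.
Set Implicit Arguments. Unset Strict Implicit. Unset Printing Implicit Defensive.
Import Order.TTheory GRing.Theory Num.Theory.
Local Open Scope ring_scope.

(* Agents: 'I_n.  Types: 'I_p.  Items of type i: pairs (i, o) with o : 'I_n
   (so the D_i are pairwise disjoint and |D_i| = n).  A bundle picks one item
   of each type: x : {ffun 'I_p -> 'I_n}, x_i = x i. *)
Definition bundle (p n : nat) := {ffun 'I_p -> 'I_n}.
Definition item (p n : nat) := ('I_p * 'I_n)%type.

Definition in_bundle p n (o : item p n) (x : bundle p n) : bool := x o.1 == o.2.

(* A lexicographic preference, given by ranks (0 = best):
   imp i < imp i'       means  type i is more important than type i'
   rk i o < rk i o'     means  item o is preferred to item o' within D_i. *)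
Record lexpref (p n : nat) := LexPref {
  imp : 'I_p -> nat;
  rk  : 'I_p -> 'I_n -> nat }.

Definition lex_gt p n (L : lexpref p n) (x y : bundle p n) : bool :=
  [exists i : 'I_p, (rk L i (x i) < rk L i (y i))%N &&
     [forall i' : 'I_p, (imp L i' < imp L i)%N ==> (x i' == y i')]].

Definition assignment (R : realFieldType) (p n : nat) := 'I_n -> bundle p n -> R.

Definition is_assignment (R : realFieldType) p n (P : assignment R p n) : Prop :=
  (forall j x, 0 <= P j x <= 1) /\
  (forall j, \sum_(x : bundle p n) P j x = 1) /\
  (forall o : item p n, \sum_(j < n) \sum_(x : bundle p n | in_bundle o x) P j x = 1).

Definition is_discrete (R : realFieldType) p n (P : assignment R p n) : Prop :=
  is_assignment P /\ (forall j x, P j x = 0 \/ P j x = 1).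

Definition decomposable (R : realFieldType) p n (P : assignment R p n) : Prop :=
  exists (k : nat) (w : 'I_k -> R) (D : 'I_k -> assignment R p n),
    [/\ (forall l, 0 <= w l), \sum_(l < k) w l = 1,
        (forall l, is_discrete (D l)) &
        (forall j x, P j x = \sum_(l < k) w l * D l j x)].

(* Multi-type probabilistic serial (MPS), as an event-driven simulation of
   the continuous eating process: between two consecutive item-exhaustion
   events each agent eats her most preferred available bundle at rate 1. *)
Section MPS.
Variables (R : realFieldType) (p n : nat) (prof : 'I_n -> lexpref p n).

Definition available (s : item p n -> R) (x : bundle p n) : bool :=
  [forall i : 'I_p, 0 < s (i, x i)].

Definition mps_choice (s : item p n -> R) (j : 'I_n) : option (bundle p n) :=
  [pick x | available s x &&
            [forall y, available s y ==> ~~ lex_gt (prof j) y x]].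

Definition mps_rate (s : item p n -> R) (o : item p n) : nat :=
  #|[pred j : 'I_n | if mps_choice s j is Some x then in_bundle o x else false]|.

(* length of the current phase: time until the first eaten item is exhausted
   (the initial value 1 is never binding: supplies are <= 1 and rates >= 1) *)
Definition mps_dt (s : item p n -> R) : R :=
  \big[Num.min/1]_(o : item p n | (0 < mps_rate s o)%N) (s o / (mps_rate s o)%:R).

Definition mps_step (st : (item p n -> R) * assignment R p n)
  : (item p n -> R) * assignment R p n :=
  let: (s, P) := st in
  (fun o => s o - (mps_rate s o)%:R * mps_dt s,
   fun j x => P j x + (if mps_choice s j == Some x then mps_dt s else 0)).

(* every phase exhausts at least one item, so p * n phases suffice; once all
   items are exhausted no bundle is available and the step is the identity *)
Definition MPS : assignment R p n :=
  (iter (p * n) mps_step (fun _ => 1, fun _ _ => 0)).2.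

End MPS.

(* The instance: n = 3 agents (0,1,2 = agents 1,2,3), p = 2 types
   (0 = F, 1 = B), items 0,1,2 = 1_X, 2_X, 3_X. *)
Definition ex_imp (j : nat) : seq nat :=
  nth [::] [:: [:: 0; 1]%N;      (* agent 1: F > B *)
               [:: 0; 1]%N;      (* agent 2: F > B *)
               [:: 1; 0]%N] j.   (* agent 3: B > F *)

Definition ex_rk (j t : nat) : seq nat :=
  if t == 0%N then [:: 0; 1; 2]%N                       (* 1_F > 2_F > 3_F *)
  else nth [::] [:: [:: 0; 1; 2]%N;                     (* 1_B > 2_B > 3_B *)
                    [:: 0; 2; 1]%N;                     (* 1_B > 3_B > 2_B *)
                    [:: 2; 0; 1]%N] j.                  (* 2_B > 3_B > 1_B *)

Definition ex_profile (j : 'I_3) : lexpref 2 3 :=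
  LexPref (fun t : 'I_2 => nth 0%N (ex_imp j) t)
          (fun (t : 'I_2) (o : 'I_3) => nth 0%N (ex_rk j t) o).

(* Main.v *)
Require Import Defs.
From mathcomp Require Import all_boot all_order all_algebra.
From mathcomp Require Import lra.
From Stdlib Require Import FunctionalExtensionality.
Set Implicit Arguments. Unset Strict Implicit. Unset Printing Implicit Defensive.
Import Order.TTheory GRing.Theory Num.Theory.
Local Open Scope ring_scope.

Definition t0 : 'I_2 := @Ordinal 2 0 isT.
Definition t1 : 'I_2 := @Ordinal 2 1 isT.
Definition o0 : 'I_3 := @Ordinal 3 0 isT.
Definition o1 : 'I_3 := @Ordinal 3 1 isT.
Definition o2 : 'I_3 := @Ordinal 3 2 isT.
Definition mkb (a b : 'I_3) : bundle 2 3 := [ffun i : 'I_2 => if val i == 0%N then a else b].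
Lemma mkb0 a b : mkb a b t0 = a. Proof. by rewrite ffunE. Qed.
Lemma mkb1 a b : mkb a b t1 = b. Proof. by rewrite ffunE. Qed.

Lemma I2P (Q : 'I_2 -> Prop) : Q t0 -> Q t1 -> forall i, Q i.
Proof. move=> H0 H1 [[|[|//]] Hi]; [have -> : Ordinal Hi = t0 | have -> : Ordinal Hi = t1]; by [apply/val_inj|]. Qed.
Lemma I3P (Q : 'I_3 -> Prop) : Q o0 -> Q o1 -> Q o2 -> forall i, Q i.
Proof. move=> H0 H1 H2 [[|[|[|//]]] Hi]; [have -> : Ordinal Hi = o0 | have -> : Ordinal Hi = o1 | have -> : Ordinal Hi = o2]; by [apply/val_inj|]. Qed.
Lemma bundleE (x : bundle 2 3) : x = mkb (x t0) (x t1).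
Proof. by apply/ffunP; apply: I2P; rewrite ?mkb0 ?mkb1. Qed.
Lemma bundleP (Q : bundle 2 3 -> Prop) : (forall a b, Q (mkb a b)) -> forall x, Q x.
Proof. by move=> H x; rewrite (bundleE x). Qed.
Lemma existsI2 (P : pred 'I_2) : [exists i, P i] = P t0 || P t1.
Proof. apply/existsP/orP => [[i]|[]]; last 2 first; [by exists t0| by exists t1|].
by move: i; apply: I2P => H; [left|right]. Qed.
Lemma forallI2 (P : pred 'I_2) : [forall i, P i] = P t0 && P t1.
Proof. apply/forallP/andP => [H|[]]; first by split; apply H.
by move=> H0 H1; apply: I2P. Qed.
Lemma cardI3 (P : pred 'I_3) : #|P| = (P o0 + P o1 + P o2)%N.
Proof.
rewrite -sum1_card big_mkcond !big_ord_recl big_ord0 /=.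
have H : forall i : 'I_3, (if i \in P then 1 else 0)%N = P i.
  by move=> i; rewrite /in_mem /=; case: (P i).
rewrite !H addn0 addnA; congr (_ + _ + _)%N; congr (nat_of_bool (P _)); exact/val_inj.
Qed.


Section Sim.
Variable R : realFieldType.
Local Notation prof := ex_profile.

Definition q (a b : nat) : R := a%:R / b%:R.
Lemma posq a b : (0 < q a b.+1) = (0 < a)%N.
Proof. by rewrite /q pmulr_lgt0 ?invr_gt0 ?ltr0n. Qed.

Definition tab (f0 f1 f2 b0 b1 b2 : R) (o : item 2 3) : R :=
  if val o.1 == 0%N then nth 0 [:: f0; f1; f2] o.2 else nth 0 [:: b0; b1; b2] o.2.
Definition rtab (f0 f1 f2 b0 b1 b2 : nat) (o : item 2 3) : nat :=
  if val o.1 == 0%N then nth 0%N [:: f0; f1; f2] o.2 else nth 0%N [:: b0; b1; b2] o.2.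
Definition ctab (x y z : bundle 2 3) (j : 'I_3) : option (bundle 2 3) :=
  Some (nth x [:: x; y; z] j).

Lemma availE (s : item 2 3 -> R) x : available s x = (0 < s (t0, x t0)) && (0 < s (t1, x t1)).
Proof. by rewrite /available forallI2. Qed.

Lemma lex_irr j x : ~~ lex_gt (prof j) x x.
Proof. by apply/existsP => -[i /andP[]]; rewrite ltnn. Qed.

Lemma choice_spec (s : item 2 3 -> R) j x : available s x ->
  (forall a b, available s (mkb a b) -> mkb a b = x \/
     (lex_gt (prof j) x (mkb a b) && ~~ lex_gt (prof j) (mkb a b) x)) ->
  mps_choice prof s j = Some x.
Proof.
move=> Ax H; rewrite /mps_choice; case: pickP => [y /andP[Ay /forallP Hy] | Hn].
  have := H (y t0) (y t1); rewrite -bundleE => /(_ Ay) [-> //|/andP[Hxy _]].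
  by have := Hy x; rewrite Ax Hxy.
have := Hn x; rewrite Ax /=; suff -> : [forall y, available s y ==> ~~ lex_gt (prof j) y x] by [].
apply/forallP => y; apply/implyP => Ay; have := H (y t0) (y t1); rewrite -bundleE.
by move=> /(_ Ay) [->|/andP[_ //]]; apply: lex_irr.
Qed.

Lemma bigmin_le (I : eqType) (r : seq I) (P : pred I) (F : I -> R) i0 :
  i0 \in r -> P i0 -> \big[Num.min/1]_(i <- r | P i) F i <= F i0.
Proof.
elim: r => // a r IH; rewrite inE big_cons => /orP[/eqP<- ->|Hr Pi].
  by rewrite ge_min lexx.
case: (P a); last exact: IH.
by rewrite ge_min (IH Hr Pi) orbT.
Qed.

Lemma bigmin_ge (I : eqType) (r : seq I) (P : pred I) (F : I -> R) v :
  v <= 1 -> (forall i, P i -> v <= F i) -> v <= \big[Num.min/1]_(i <- r | P i) F i.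
Proof.
move=> v1 H; elim: r => [|a r IH]; first by rewrite big_nil.
by rewrite big_cons; case: ifP => // Pa; rewrite le_min H.
Qed.

Lemma dt_spec (s : item 2 3 -> R) (rt : item 2 3 -> nat) o0 v :
  (forall o, mps_rate prof s o = rt o) -> (0 < rt o0)%N -> s o0 / (rt o0)%:R = v ->
  v <= 1 -> (forall o, (0 < rt o)%N -> v <= s o / (rt o)%:R) -> mps_dt prof s = v.
Proof.
move=> Hr Ho0 Ev v1 H; apply/le_anti/andP; split.
  by rewrite -Ev -Hr; apply: bigmin_le; rewrite ?mem_index_enum ?Hr.
by apply: bigmin_ge => // o; rewrite !Hr; apply: H.
Qed.

Lemma step_spec (s s' : item 2 3 -> R) P ch rt dt :
  (forall j, mps_choice prof s j = ch j) -> (forall o, mps_rate prof s o = rt o) ->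
  mps_dt prof s = dt -> (forall o, s' o = s o - (rt o)%:R * dt) ->
  mps_step prof (s, P) = (s', fun j x => P j x + if ch j == Some x then dt else 0).
Proof.
move=> Hc Hr Hd Hs; rewrite /mps_step; congr pair.
  by apply: functional_extensionality => o; rewrite Hs Hr Hd.
apply: functional_extensionality => j; apply: functional_extensionality => x.
by rewrite Hc Hd.
Qed.

Ltac solve_choice :=
  apply: choice_spec;
  [ rewrite availE ?mkb0 ?mkb1 /= ?posq //
  | do 2 apply: I3P; rewrite availE ?mkb0 ?mkb1 /= ?posq //= => _;
    first [by left | right; rewrite /lex_gt !existsI2 !forallI2 /= !mkb0 !mkb1 //]].

Ltac solve_rate ch :=
  case; apply: I2P; apply: I3P; rewrite /mps_rate cardI3 /= !ch /=;
  rewrite /in_bundle /= ?mkb0 ?mkb1 //.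

Ltac solve_tab := case; apply: I2P; apply: I3P; rewrite /= /tab /rtab /q /=; lra.

Ltac solve_dt rt o :=
  apply: (@dt_spec _ _ o _ rt); [ by [] | rewrite /= /tab /rtab /q /=; lra | rewrite /q; lra |
   case; apply: I2P; apply: I3P; rewrite /= ?rt /rtab /=; try by [];
   move=> _; rewrite /tab /q /=; lra ].

Local Notation S0 := (tab (q 1 1) (q 1 1) (q 1 1) (q 1 1) (q 1 1) (q 1 1)).
Local Notation C1 := (ctab (mkb o0 o0) (mkb o0 o0) (mkb o0 o1)).
Local Notation RT1 := (rtab 3 0 0 2 1 0).
Local Notation D1 := (q 1 3).
Local Notation S1 := (tab (q 0 1) (q 1 1) (q 1 1) (q 1 3) (q 2 3) (q 1 1)).
Lemma ch1 j : mps_choice prof S0 j = C1 j.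
Proof. move: j; apply: I3P; solve_choice. Qed.
Lemma rt1 : forall o, mps_rate prof S0 o = RT1 o.
Proof. solve_rate ch1. Qed.
Lemma dt1 : mps_dt prof S0 = D1.
Proof. solve_dt rt1 (t0, o0). Qed.

Lemma step1 P : mps_step prof (S0, P) = (S1, fun j x => P j x + if C1 j == Some x then D1 else 0).
Proof. apply: step_spec; [exact: ch1 | exact: rt1 | exact: dt1 | solve_tab]. Qed.

Local Notation C2 := (ctab (mkb o1 o0) (mkb o1 o0) (mkb o1 o1)).
Local Notation RT2 := (rtab 0 3 0 2 1 0).
Local Notation D2 := (q 1 6).
Local Notation S2 := (tab (q 0 1) (q 1 2) (q 1 1) (q 0 1) (q 1 2) (q 1 1)).
Lemma ch2 j : mps_choice prof S1 j = C2 j.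
Proof. move: j; apply: I3P; solve_choice. Qed.
Lemma rt2 : forall o, mps_rate prof S1 o = RT2 o.
Proof. solve_rate ch2. Qed.
Lemma dt2 : mps_dt prof S1 = D2.
Proof. solve_dt rt2 (t1, o0). Qed.
Lemma step2 P : mps_step prof (S1, P) = (S2, fun j x => P j x + if C2 j == Some x then D2 else 0).
Proof. apply: step_spec; [exact: ch2 | exact: rt2 | exact: dt2 | solve_tab]. Qed.

Local Notation C3 := (ctab (mkb o1 o1) (mkb o1 o2) (mkb o1 o1)).
Local Notation RT3 := (rtab 0 3 0 0 2 1).
Local Notation D3 := (q 1 6).
Local Notation S3 := (tab (q 0 1) (q 0 1) (q 1 1) (q 0 1) (q 1 6) (q 5 6)).
Lemma ch3 j : mps_choice prof S2 j = C3 j.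
Proof. move: j; apply: I3P; solve_choice. Qed.
Lemma rt3 : forall o, mps_rate prof S2 o = RT3 o.
Proof. solve_rate ch3. Qed.
Lemma dt3 : mps_dt prof S2 = D3.
Proof. solve_dt rt3 (t0, o1). Qed.
Lemma step3 P : mps_step prof (S2, P) = (S3, fun j x => P j x + if C3 j == Some x then D3 else 0).
Proof. apply: step_spec; [exact: ch3 | exact: rt3 | exact: dt3 | solve_tab]. Qed.

Local Notation C4 := (ctab (mkb o2 o1) (mkb o2 o2) (mkb o2 o1)).
Local Notation RT4 := (rtab 0 0 3 0 2 1).
Local Notation D4 := (q 1 12).
Local Notation S4 := (tab (q 0 1) (q 0 1) (q 3 4) (q 0 1) (q 0 1) (q 3 4)).
Lemma ch4 j : mps_choice prof S3 j = C4 j.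
Proof. move: j; apply: I3P; solve_choice. Qed.
Lemma rt4 : forall o, mps_rate prof S3 o = RT4 o.
Proof. solve_rate ch4. Qed.
Lemma dt4 : mps_dt prof S3 = D4.
Proof. solve_dt rt4 (t1, o1). Qed.
Lemma step4 P : mps_step prof (S3, P) = (S4, fun j x => P j x + if C4 j == Some x then D4 else 0).
Proof. apply: step_spec; [exact: ch4 | exact: rt4 | exact: dt4 | solve_tab]. Qed.

Local Notation C5 := (ctab (mkb o2 o2) (mkb o2 o2) (mkb o2 o2)).
Local Notation RT5 := (rtab 0 0 3 0 0 3).
Local Notation D5 := (q 1 4).
Local Notation S5 := (tab (q 0 1) (q 0 1) (q 0 1) (q 0 1) (q 0 1) (q 0 1)).
Lemma ch5 j : mps_choice prof S4 j = C5 j.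
Proof. move: j; apply: I3P; solve_choice. Qed.
Lemma rt5 : forall o, mps_rate prof S4 o = RT5 o.
Proof. solve_rate ch5. Qed.
Lemma dt5 : mps_dt prof S4 = D5.
Proof. solve_dt rt5 (t0, o2). Qed.
Lemma step5 P : mps_step prof (S4, P) = (S5, fun j x => P j x + if C5 j == Some x then D5 else 0).
Proof. apply: step_spec; [exact: ch5 | exact: rt5 | exact: dt5 | solve_tab]. Qed.

Lemma ch6 j : mps_choice prof S5 j = None.
Proof.
rewrite /mps_choice; case: pickP => // y /andP[]; move: y; apply: bundleP; do 2 apply: I3P;
by rewrite availE ?mkb0 ?mkb1 /= ?posq.
Qed.
Lemma step6 P : (mps_step prof (S5, P)).2 = P.
Proof.
apply: functional_extensionality => j; apply: functional_extensionality => x.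
by rewrite /= ch6 addr0.
Qed.

Lemma init_eq : (fun _ : item 2 3 => (1 : R)) = S0.
Proof. apply: functional_extensionality; solve_tab. Qed.

Lemma MPS_eq : MPS R prof = fun j x =>
  0 + (if C1 j == Some x then D1 else 0) + (if C2 j == Some x then D2 else 0)
    + (if C3 j == Some x then D3 else 0) + (if C4 j == Some x then D4 else 0)
    + (if C5 j == Some x then D5 else 0).
Proof.
rewrite /MPS (_ : (2 * 3 = 6)%N) // !iterS [iter 0 _ _]/= init_eq step1 step2 step3 step4.
by rewrite (surjective_pairing (mps_step _ _)) step5 step6.
Qed.

Lemma someneq1 (x : bundle 2 3) b : x t1 != b -> forall a, (Some (mkb a b) == Some x) = false.
Proof. by move=> H a; apply/eqP => -[E]; move: H; rewrite -E mkb1 eqxx. Qed.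
Lemma someneq0 (x : bundle 2 3) a : x t0 != a -> forall b, (Some (mkb a b) == Some x) = false.
Proof. by move=> H b; apply/eqP => -[E]; move: H; rewrite -E mkb0 eqxx. Qed.
Lemma mkb_eq a b c d : (Some (mkb a b) == Some (mkb c d)) = (a == c) && (b == d).
Proof.
apply/eqP/andP => [[H]|[/eqP-> /eqP->]//]; split; apply/eqP.
  by have := congr1 (fun f : bundle 2 3 => f t0) H; rewrite !mkb0.
by have := congr1 (fun f : bundle 2 3 => f t1) H; rewrite !mkb1.
Qed.

Lemma factA : 0 < MPS R prof o0 (mkb o2 o1).
Proof. rewrite MPS_eq /= /ctab /= !mkb_eq /= /q; lra. Qed.

Lemma factB (x : bundle 2 3) : x t1 != o1 -> x t0 != o2 -> MPS R prof o2 x = 0.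
Proof.
move=> H1 H0; rewrite MPS_eq /= /ctab /= !(someneq1 H1) (someneq0 H0).
by rewrite !addr0.
Qed.

End Sim.

Theorem mainTheorem15 (R : realFieldType) :
  ~ decomposable (MPS R ex_profile).
Proof.
move=> [k [w [D [Hw Hs HD HP]]]].
set b := mkb o2 o1.
have A := factA R; rewrite HP in A.
have [l Hl] : exists l, 0 < w l * D l o0 b.
  case/boolP: [exists l, 0 < w l * D l o0 b] => [/existsP//|/existsPn Hn].
  have : \sum_(l < k) w l * D l o0 b <= 0 by apply: sumr_le0 => l _; rewrite leNgt Hn.
  by rewrite leNgt A.
have [[Hb [Hrow Hitem]] H01] := HD l.
have Db : D l o0 b = 1.
  by case: (H01 o0 b) => // E; move: Hl; rewrite E mulr0 ltxx.
have wl : 0 < w l by move: Hl; rewrite Db mulr1.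
have Dge0 : forall j x, 0 <= D l j x by move=> j x; case/andP: (Hb j x).
have Dall : forall l' j x, 0 <= D l' j x.
  by move=> l' j x; case: (HD l') => [[Hb' _] _]; case/andP: (Hb' j x).
have supp : forall x : bundle 2 3, x t1 != o1 -> x t0 != o2 -> D l o2 x = 0.
  move=> x H1 H0; have := factB R H1 H0; rewrite HP => E.
  have := psumr_eq0P (P := predT) (fun l' _ => mulr_ge0 (Hw l') (Dall l' o2 x)) E.
  move=> Hz; have := Hz l isT.
  by move/eqP; rewrite mulf_eq0 => /orP[/eqP E'|/eqP//]; move: wl; rewrite E' ltxx.
have key : forall o : item 2 3, in_bundle o b ->
    \sum_(x | in_bundle o x) D l o2 x <= 0.
  move=> o Ho; have := Hitem o.
  rewrite (bigD1 o0) //= (bigD1 o2) //=.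
  have h1 : 1 <= \sum_(x | in_bundle o x) D l o0 x.
    by rewrite (bigD1 b) //= Db lerDl sumr_ge0.
  have h2 : 0 <= \sum_(i < 3 | (i != o0) && (i != o2)) \sum_(x | in_bundle o x) D l i x.
    by apply: sumr_ge0 => i _; apply: sumr_ge0.
  move=> E; lra.
have Hb1 : in_bundle (t1, o1) b by rewrite /in_bundle /= /b mkb1.
have Hb0 : in_bundle (t0, o2) b by rewrite /in_bundle /= /b mkb0.
have k1 := key _ Hb1.
have k0 := key _ Hb0.
have : \sum_x D l o2 x <= \sum_(x | in_bundle (t1, o1) x) D l o2 x +
                          \sum_(x | in_bundle (t0, o2) x) D l o2 x.
  rewrite [X in _ <= X + _]big_mkcond [X in _ <= _ + X]big_mkcond -big_split /=.
  apply: ler_sum => x _; rewrite /in_bundle /=.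
  case: eqP => [_|/eqP H1]; case: eqP => [_|/eqP H0].
  - by rewrite lerDl.
  - by rewrite addr0.
  - by rewrite add0r.
  - by rewrite (supp x H1 H0) addr0.
rewrite Hrow; lra.
Qed.
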